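(* Let $n\in\mathbb{N}$ and assume $(Q_{n-1})$: $d_{i,l}+d_{j,k}\le d_{i,k}+d_{j,l}$ for all integers $-1\le i\le j\le k\le l\le n-1$. Then for each $m\in\mathbb{N}$ with $m\le n$, the minimization problem defining $d_{m,n}$ admits an optimal transport plan that is both simple and nested.
   Context: Let $\mathbb{N}=\{0,1,2,\dots\}$. Fix a sequence $(\pi^n)_{n\in\mathbb{N}}$ where each $\pi^n=(\pi^n_i)_{i\in\mathbb{N}}$ is a probability distribution on $\mathbb{N}$ with support contained in $\{0,\dots,n\}$, and $\pi^n\ne\pi^m$ for $m\ne n$. Define reals $d_{m,n}$ for $m,n\in\mathbb{N}\cup\{-1\}$ recursively as follows: $d_{-1,-1}=0$, $d_{-1,j}=d_{j,-1}=1$ for $j\in\mathbb{N}$, and for $m,n\in\mathbb{N}$, $$d_{m,n}=\min_{z\in\mathcal{F}_{m,n}}\sum_{i=0}^m\sum_{j=0}^n z_{i,j}\,d_{i-1,j-1},$$ where $\mathcal{F}_{m,n}$ is the set of transport plans from $\pi^m$ to $\pi^n$, i.e. arrays $z=(z_{i,j})_{0\le i\le m,\,0\le j\le n}$ with $z_{i,j}\ge0$, $\sum_{j=0}^n z_{i,j}=\pi^m_i$ for all $i\le m$, and $\sum_{i=0}^m z_{i,j}=\pi^n_j$ for all $j\le n$. For $m\le n$, a transport plan $z\in\mathcal{F}_{m,n}$ is simple if $z_{i,i}=\min\{\pi^m_i,\pi^n_i\}$ for all $i=0,\dots,m$; it is nested if there are no indices $i<j<k<l$ with $z_{i,k}>0$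 and $z_{j,l}>0$. *)

(* Defs.v *)
From HB Require Import structures.
From mathcomp Require Import all_boot all_order all_algebra.
From mathcomp Require Import reals.
Set Implicit Arguments. Unset Strict Implicit. Unset Printing Implicit Defensive.
Import Order.TTheory GRing.Theory Num.Theory.
Local Open Scope ring_scope.

Section Defs.
Variable R : realType.

Definition prob_seq (pi : nat -> nat -> R) : Prop :=
  [/\ (forall n i, 0 <= pi n i),
      (forall n i, (n < i)%N -> pi n i = 0),
      (forall n, \sum_(i < n.+1) pi n i = 1) &
      (forall m n, m <> n -> pi m <> pi n)].

Definition transport_plan (pi : nat -> nat -> R) (m n : nat)
    (z : nat -> nat -> R) : Prop :=
  [/\ (forall i j, (i <= m)%N -> (j <= n)%N -> 0 <= z i j),
      (forall i, (i <= m)%N -> \sum_(j < n.+1) z i j = pi m i) &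
      (forall j, (j <= n)%N -> \sum_(i < m.+1) z i j = pi n j)].

Definition plan_cost (d : int -> int -> R) (m n : nat) (z : nat -> nat -> R) : R :=
  \sum_(i < m.+1) \sum_(j < n.+1) z i j * d (i%:Z - 1) (j%:Z - 1).

(* d is the family d_{m,n} (m,n in N u {-1}) defined recursively in the paper:
   base values, and d_{m,n} = min over transport plans of the cost. *)
Definition is_d (pi : nat -> nat -> R) (d : int -> int -> R) : Prop :=
  [/\ d (-1) (-1) = 0,
      (forall j : nat, d (-1) j%:Z = 1 /\ d j%:Z (-1) = 1) &
      (forall m n : nat,
         (exists z, transport_plan pi m n z /\ plan_cost d m n z = d m%:Z n%:Z) /\
         (forall z, transport_plan pi m n z -> d m%:Z n%:Z <= plan_cost d m n z))].

Definition condQ (d : int -> int -> R) (K : int) : Prop :=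
  forall i j k l : int, -1 <= i -> i <= j -> j <= k -> k <= l -> l <= K ->
    d i l + d j k <= d i k + d j l.

Definition simple_plan (pi : nat -> nat -> R) (m n : nat) (z : nat -> nat -> R) :=
  forall i, (i <= m)%N -> z i i = Num.min (pi m i) (pi n i).

Definition nested_plan (m n : nat) (z : nat -> nat -> R) :=
  ~ exists i j k l : nat,
      [/\ (i < j < k)%N, (k < l)%N, (j <= m)%N, (l <= n)%N &
          (0 < z i k /\ 0 < z j l)].

End Defs.

(* Main.v *)
Require Import Defs.
From HB Require Import structures.
From mathcomp Require Import all_boot all_order all_algebra.
From mathcomp Require Import reals zify lra.
Import Order.TTheory GRing.Theory Num.Theory.
Set Implicit Arguments. Unset Strict Implicit. Unset Printing Implicit Defensive.
Local Open Scope ring_scope.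

Section Aux.
Variable R : realType.

Lemma sum_delta N a (F : nat -> R) : (a < N)%N ->
  \sum_(j < N) ((j : nat) == a)%:R * F j = F a.
Proof.
move=> ha; rewrite (bigD1 (Ordinal ha)) //= eqxx mul1r big1 ?addr0 // => j hj.
have -> : ((j : nat) == a) = false.
  by apply/negbTE; apply: contra hj => /eqP e; apply/eqP/val_inj.
by rewrite mul0r.
Qed.

Lemma sum_delta' N a (F : nat -> R) : (a < N)%N ->
  \sum_(j < N) F j * ((j : nat) == a)%:R = F a.
Proof.
by move=> ha; rewrite -(sum_delta F ha); apply: eq_bigr => j _; rewrite mulrC.
Qed.

Lemma bool_sum_le N (P Q : nat -> bool) :
  (forall x, (x < N)%N -> Q x -> P x) ->
  (\sum_(x < N) Q x <= \sum_(x < N) P x)%N.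
Proof.
move=> h; apply: leq_sum => x _; have := h x (ltn_ord x).
by case: (Q x); case: (P x) => // ->.
Qed.

Lemma bool_sum_lt N (P Q : nat -> bool) x0 : (x0 < N)%N ->
  (forall x, (x < N)%N -> Q x -> P x) -> P x0 -> ~~ Q x0 ->
  (\sum_(x < N) Q x < \sum_(x < N) P x)%N.
Proof.
move=> hx h hP hQ.
rewrite (bigD1 (Ordinal hx)) //= [X in (_ < X)%N](bigD1 (Ordinal hx)) //=.
rewrite (negbTE hQ) hP add0n add1n ltnS.
apply: leq_sum => x _; have := h x (ltn_ord x).
by case: (Q x); case: (P x) => // ->.
Qed.

Lemma mul_div_cancel (x y : R) : (y = 0 -> x = 0) -> x / y * y = x.
Proof.
have [->|hy] := eqVneq y 0; first by move=> h; rewrite (h erefl) !mul0r.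
by move=> _; rewrite divfK.
Qed.


Variable pi : nat -> nat -> R.
Variable d : int -> int -> R.
Hypothesis Hpi : prob_seq pi.
Hypothesis Hd : is_d pi d.

Definition D (p q : nat) := d (p%:Z - 1) (q%:Z - 1).

Lemma D00 : D 0 0 = 0.
Proof. by case: Hd => h _ _; rewrite /D sub0r. Qed.

Lemma D0S q : D 0 q.+1 = 1.
Proof.
case: Hd => _ h _; rewrite /D sub0r.
have -> : (q.+1%:Z - 1 = q%:Z) by lia.
by case: (h q).
Qed.

Lemma DS0 q : D q.+1 0 = 1.
Proof.
case: Hd => _ h _; rewrite /D sub0r.
have -> : (q.+1%:Z - 1 = q%:Z) by lia.
by case: (h q).
Qed.

Lemma DSS p q : D p.+1 q.+1 = d p q.
Proof.
rewrite /D; have -> : (q.+1%:Z - 1 = q%:Z) by lia.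
by have -> : (p.+1%:Z - 1 = p%:Z) by lia.
Qed.

Lemma costE m n z : plan_cost d m n z =
  \sum_(i < m.+1) \sum_(j < n.+1) z i j * D i j.
Proof. by []. Qed.

Lemma pi_ge0 n i : 0 <= pi n i.
Proof. by case: Hpi. Qed.

Lemma pi_sum n : \sum_(i < n.+1) pi n i = 1.
Proof. by case: Hpi. Qed.

Lemma d_opt m n : exists z, transport_plan pi m n z /\ plan_cost d m n z = d m n.
Proof. by case: Hd => _ _ h; case: (h m n). Qed.

Lemma d_min m n z : transport_plan pi m n z -> d m n <= plan_cost d m n z.
Proof. by case: Hd => _ _ h; case: (h m n) => _; apply. Qed.

Lemma D_bounds p q : 0 <= D p q <= 1.
Proof.
elim: (p + q)%N {-2}p {-2}q (leqnn (p + q)) => [|N IH] {}p {}q hN.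
  have [-> ->] : (p = 0%N /\ q = 0%N) by lia.
  by rewrite D00 ler01 lexx.
case: p hN => [|p]; first by case: q => [|q] _; rewrite ?D00 ?D0S ?ler01 ?lexx.
case: q => [|q] hN; first by rewrite DS0 ler01 lexx.
rewrite DSS; have [z [[z0 zr zc] <-]] := d_opt p q.
rewrite costE; apply/andP; split.
  apply: sumr_ge0 => i _; apply: sumr_ge0 => j _; apply: mulr_ge0.
    by apply: z0; rewrite -ltnS.
  by case/andP: (IH i j ltac:(have := ltn_ord i; have := ltn_ord j; lia)).
apply: le_trans (_ : \sum_(i < p.+1) \sum_(j < q.+1) z i j <= 1).
  apply: ler_sum => i _; apply: ler_sum => j _.
  rewrite -[X in _ <= X]mulr1; apply: ler_wpM2l; first by apply: z0; rewrite -ltnS.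
  by case/andP: (IH i j ltac:(have := ltn_ord i; have := ltn_ord j; lia)).
rewrite (eq_bigr (fun i : 'I_p.+1 => pi p i)) ?pi_sum // => i _.
by apply: zr; rewrite -ltnS.
Qed.

Lemma D_ge0 p q : 0 <= D p q.
Proof. by case/andP: (D_bounds p q). Qed.

Lemma D_le1 p q : D p q <= 1.
Proof. by case/andP: (D_bounds p q). Qed.

Lemma Ddiag p : D p p <= 0.
Proof.
elim: p {-2}p (leqnn p) => [|N IH] p hp.
  have -> : p = 0%N by lia.
  by rewrite D00.
case: p hp => [|p] hp; first by rewrite D00.
rewrite DSS.
pose z := fun i j : nat => pi p i * ((j : nat) == i)%:R.
have hz : transport_plan pi p p z.
  split.
  - by move=> i j _ _; rewrite /z mulr_ge0 ?pi_ge0 ?ler0n.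
  - move=> i hi; rewrite /z.
    by apply: (sum_delta' (fun _ => pi p i)); rewrite ltnS.
  - move=> j hj; rewrite /z.
    rewrite (eq_bigr (fun i : 'I_p.+1 => ((i : nat) == j)%:R * pi p i)).
      by rewrite sum_delta.
    by move=> i _; rewrite mulrC eq_sym.
apply: le_trans (d_min hz) _; rewrite costE.
apply: sumr_le0 => i _.
rewrite (eq_bigr (fun j : 'I_p.+1 => ((j : nat) == i)%:R * (pi p i * D i j))).
  rewrite (sum_delta (fun j => pi p i * D i j)) //; apply: mulr_ge0_le0; first exact: pi_ge0.
  by apply: IH; have := ltn_ord i; lia.
by move=> j _; rewrite /z mulrA [_ * (_ == _)%:R]mulrC -mulrA.
Qed.


Lemma plan_zero_col a b z i j : transport_plan pi a b z -> (i <= a)%N -> (j <= b)%N ->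
  pi b j = 0 -> z i j = 0.
Proof.
case=> z0 _ zc hi hj h0; have := zc j hj; rewrite h0 => hs.
have := (psumr_eq0P (P := predT) (F := fun i : 'I_a.+1 => z i j)) _ hs (Ordinal (hi : (i < a.+1)%N)).
by apply => // k _; apply: z0; rewrite // -ltnS.
Qed.

Lemma plan_zero_row a b z i j : transport_plan pi a b z -> (i <= a)%N -> (j <= b)%N ->
  pi a i = 0 -> z i j = 0.
Proof.
case=> z0 zr _ hi hj h0; have := zr i hi; rewrite h0 => hs.
have := (psumr_eq0P (P := predT) (F := fun j : 'I_b.+1 => z i j)) _ hs (Ordinal (hj : (j < b.+1)%N)).
by apply => // k _; apply: z0; rewrite // -ltnS.
Qed.

Lemma glue a b c z1 z2 : transport_plan pi a b z1 -> transport_plan pi b c z2 ->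
  let w := fun i k => \sum_(j < b.+1) z1 i j / pi b j * z2 j k in
  transport_plan pi a c w /\
  forall F G H : nat -> nat -> R,
   (forall i j k, (i <= a)%N -> (j <= b)%N -> (k <= c)%N -> F i k <= G i j + H j k) ->
   \sum_(i < a.+1) \sum_(k < c.+1) w i k * F i k <=
   \sum_(i < a.+1) \sum_(j < b.+1) z1 i j * G i j +
   \sum_(j < b.+1) \sum_(k < c.+1) z2 j k * H j k.
Proof.
move=> h1 h2 w; have [z10 z1r z1c] := h1; have [z20 z2r z2c] := h2.
have t0 i j k : (i <= a)%N -> (j <= b)%N -> (k <= c)%N -> 0 <= z1 i j / pi b j * z2 j k.
  by move=> hi hj hk; rewrite mulr_ge0 ?divr_ge0 ?pi_ge0 ?z10 ?z20.
have e1 i j : (i <= a)%N -> (j <= b)%N -> z1 i j / pi b j * pi b j = z1 i j.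
  by move=> hi hj; apply: mul_div_cancel; apply: plan_zero_col h1 hi hj.
have e2 j k : (j <= b)%N -> (k <= c)%N -> pi b j / pi b j * z2 j k = z2 j k.
  move=> hj hk; have [h|h] := eqVneq (pi b j) 0.
    by rewrite (plan_zero_row h2 hj hk h) mulr0.
  by rewrite divff // mul1r.
split; first split.
- move=> i k hi hk; apply: sumr_ge0 => j _; apply: t0 => //; by rewrite -ltnS.
- move=> i hi; rewrite /w exchange_big /= -(z1r i hi); apply: eq_bigr => j _.
  have hj : (j <= b)%N by rewrite -ltnS.
  by rewrite -mulr_sumr z2r // e1.
- move=> k hk; rewrite /w exchange_big /= -(z2c k hk); apply: eq_bigr => j _.
  have hj : (j <= b)%N by rewrite -ltnS.
  by rewrite -mulr_suml -mulr_suml z1c // e2.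
move=> F G H hFGH.
apply: le_trans (_ : \sum_(i < a.+1) \sum_(k < c.+1) \sum_(j < b.+1)
   (z1 i j / pi b j * z2 j k) * (G i j + H j k) <= _).
  apply: ler_sum => i _; apply: ler_sum => k _; rewrite /w mulr_suml.
  apply: ler_sum => j _; apply: ler_wpM2l; first by apply: t0; rewrite -ltnS.
  by apply: hFGH; rewrite -ltnS.
rewrite le_eqVlt; apply/orP; left; apply/eqP.
under eq_bigr do under eq_bigr do under eq_bigr do rewrite mulrDr.
under eq_bigr do under eq_bigr do rewrite big_split /=.
under eq_bigr do rewrite big_split /=.
rewrite big_split /=; congr (_ + _).
  apply: eq_bigr => i _; rewrite exchange_big /=; apply: eq_bigr => j _.
  have hi : (i <= a)%N by rewrite -ltnS.
  have hj : (j <= b)%N by rewrite -ltnS.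
  have -> : z1 i j * G i j = z1 i j / pi b j * (\sum_(k < c.+1) z2 j k) * G i j.
    by rewrite z2r // e1.
  by rewrite mulr_sumr mulr_suml.
under eq_bigr do rewrite exchange_big /=.
rewrite exchange_big /=; apply: eq_bigr => j _.
rewrite exchange_big /=; apply: eq_bigr => k _.
have hk : (k <= c)%N by rewrite -ltnS.
have hj : (j <= b)%N by rewrite -ltnS.
have -> : z2 j k * H j k = (\sum_(i < a.+1) z1 i j) / pi b j * z2 j k * H j k.
  by rewrite z1c // e2.
rewrite !mulr_suml.
by apply: eq_bigr.
Qed.

Lemma tri p q r : D p r <= D p q + D q r.
Proof.
elim: (p + q + r)%N {-2}p {-2}q {-2}r (leqnn (p + q + r)) => [|N IH] {}p {}q {}r hN.
  have [-> [-> ->]] : (p = 0%N /\ q = 0%N /\ r = 0%N) by lia.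
  by rewrite D00 addr0.
case: p hN => [|p] hN.
  case: r hN => [|r] hN; first by rewrite D00 addr_ge0 ?D_ge0.
  case: q hN => [|q] hN; first by rewrite D00 add0r.
  by rewrite !D0S lerDl D_ge0.
case: r hN => [|r] hN.
  case: q hN => [|q] hN; first by rewrite D00 addr0.
  by rewrite !DS0 lerDr D_ge0.
case: q hN => [|q] hN.
  rewrite D0S DS0; apply: le_trans (D_le1 _ _) _.
  by rewrite -[X in X <= _]addr0 lerD2l ler01.
rewrite !DSS.
have [z1 [h1 c1]] := d_opt p q.
have [z2 [h2 c2]] := d_opt q r.
have [hw hc] := glue h1 h2.
apply: le_trans (d_min hw) _.
rewrite -c1 -c2 !costE; apply: hc => i j k hi hj hk.
apply: IH; lia.
Qed.

Definition dl (a b x y : nat) : R := (x == a)%:R * (y == b)%:R.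
Definition sw (z : nat -> nat -> R) r1 r2 c1 c2 e x y :=
  z x y + e * (dl r1 c1 x y + dl r2 c2 x y - dl r1 c2 x y - dl r2 c1 x y).

Lemma sum_ind N a : (a < N)%N -> \sum_(j < N) ((j : nat) == a)%:R = 1 :> R.
Proof.
move=> ha; rewrite -[RHS](sum_delta (fun _ => (1:R)) ha).
by apply: eq_bigr => j _; rewrite mulr1.
Qed.

Lemma sum_dl_row n a b x : (b <= n)%N -> \sum_(y < n.+1) dl a b x y = (x == a)%:R.
Proof.
move=> hb; rewrite /dl -mulr_sumr.
by rewrite sum_ind ?mulr1.
Qed.

Lemma sum_dl_col m a b y : (a <= m)%N -> \sum_(x < m.+1) dl a b x y = (y == b)%:R.
Proof.
move=> ha; rewrite /dl -mulr_suml.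
by rewrite sum_ind ?mul1r.
Qed.

Lemma sum_dl_cost m n a b : (a <= m)%N -> (b <= n)%N ->
  \sum_(x < m.+1) \sum_(y < n.+1) dl a b x y * D x y = D a b.
Proof.
move=> ha hb; rewrite /dl.
rewrite (eq_bigr (fun x : 'I_m.+1 => ((x:nat) == a)%:R * D x b)).
  by rewrite (sum_delta (fun x => D x b)).
move=> x _; rewrite (eq_bigr (fun y : 'I_n.+1 => ((y:nat) == b)%:R * (((x:nat) == a)%:R * D x y))).
  by rewrite (sum_delta (fun y => ((x:nat) == a)%:R * D x y)).
by move=> y _; rewrite mulrAC mulrC.
Qed.

Lemma sw_cost m n z r1 r2 c1 c2 e : (r1 <= m)%N -> (r2 <= m)%N -> (c1 <= n)%N -> (c2 <= n)%N ->
  plan_cost d m n (sw z r1 r2 c1 c2 e) =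
  plan_cost d m n z + e * (D r1 c1 + D r2 c2 - D r1 c2 - D r2 c1).
Proof.
move=> h1 h2 h3 h4; rewrite !costE /sw.
under eq_bigr do under eq_bigr do rewrite mulrDl.
under eq_bigr do rewrite big_split /=.
rewrite big_split /=; congr (_ + _).
under eq_bigr do under eq_bigr do rewrite -mulrA.
under eq_bigr do rewrite -mulr_sumr.
rewrite -mulr_sumr; congr (_ * _).
under eq_bigr do under eq_bigr do rewrite !mulrBl mulrDl.
under eq_bigr do rewrite !sumrB big_split /=.
by rewrite !sumrB big_split /= !sum_dl_cost.
Qed.

Definition plan m n z := transport_plan pi m n z.

Lemma sw_plan m n z r1 r2 c1 c2 e : plan m n z ->
  (r1 <= m)%N -> (r2 <= m)%N -> (c1 <= n)%N -> (c2 <= n)%N ->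
  r1 != r2 -> c1 != c2 -> 0 <= e -> e <= z r1 c2 -> e <= z r2 c1 ->
  plan m n (sw z r1 r2 c1 c2 e).
Proof.
move=> [z0 zr zc] h1 h2 h3 h4 hr hc he0 he1 he2; split.
- move=> x y hx hy; have zxy := z0 x y hx hy; rewrite /sw /dl.
  have hr' : r2 != r1 by rewrite eq_sym.
  have hc' : c2 != c1 by rewrite eq_sym.
  have [ex1|nx1] := eqVneq x r1; have [ex2|nx2] := eqVneq x r2;
  have [ey1|ny1] := eqVneq y c1; have [ey2|ny2] := eqVneq y c2;
  rewrite ?ex1 ?ex2 ?ey1 ?ey2 ?eqxx ?(negbTE nx1) ?(negbTE nx2) ?(negbTE ny1) ?(negbTE ny2)
     ?(negbTE hr) ?(negbTE hr') ?(negbTE hc) ?(negbTE hc') /=;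
  rewrite ?mul1r ?mulr1 ?mul0r ?mulr0 ?addr0 ?add0r ?subr0 ?sub0r ?oppr0 ?mulr0 ?addr0;
  try (by subst; rewrite eqxx in hr); try (by subst; rewrite eqxx in hc); subst.
  all: try (by rewrite addr_ge0 // mulr_ge0).
  all: try (by rewrite mulrN1 subr_ge0).
  all: try done.
  all: try (by rewrite mulrN1 addr_ge0 // subr_ge0).
  all: try (by rewrite mulrN1 -addrA subrr addr0).
  all: try (by rewrite mulrN1 subr_ge0).
  all: try (by rewrite sub0r mulrN1 subr_ge0).
  all: idtac.
- move=> x hx; rewrite /sw big_split /= -mulr_sumr !sumrB big_split /= !sum_dl_row //.
  by rewrite zr // (addrC (x == r1)%:R) addrK subrr mulr0 addr0.
- move=> y hy; rewrite /sw big_split /= -mulr_sumr !sumrB big_split /= !sum_dl_col //.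
  by rewrite zc // addrK subrr mulr0 addr0.
Qed.


Lemma sw_le z r1 r2 c1 c2 e x y : 0 <= e -> ~~ ((x == r1) && (y == c1)) ->
  ~~ ((x == r2) && (y == c2)) -> sw z r1 r2 c1 c2 e x y <= z x y.
Proof.
move=> he h1 h2; rewrite /sw /dl -!natrM !mulnb (negbTE h1) (negbTE h2) /=.
rewrite gerDl; apply: mulr_ge0_le0 => //.
by rewrite add0r sub0r -opprD oppr_le0 addr_ge0 // ler0n.
Qed.

Lemma sw_ge z r1 r2 c1 c2 e x y : 0 <= e -> ~~ ((x == r1) && (y == c2)) ->
  ~~ ((x == r2) && (y == c1)) -> z x y <= sw z r1 r2 c1 c2 e x y.
Proof.
move=> he h1 h2; rewrite /sw /dl -!natrM !mulnb (negbTE h1) (negbTE h2) /=.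
rewrite lerDl; apply: mulr_ge0 => //.
by rewrite !subr0 addr_ge0 // ler0n.
Qed.

Lemma sw_eq12 z r1 r2 c1 c2 e : r1 != r2 -> c1 != c2 ->
  sw z r1 r2 c1 c2 e r1 c2 = z r1 c2 - e.
Proof.
move=> hr hc; have hc' : c2 != c1 by rewrite eq_sym.
rewrite /sw /dl !eqxx (negbTE hr) (negbTE hc') /=.
rewrite ?mulr1n ?mulr0n; lra.
Qed.

Lemma sw_eq21 z r1 r2 c1 c2 e : r1 != r2 -> c1 != c2 ->
  sw z r1 r2 c1 c2 e r2 c1 = z r2 c1 - e.
Proof.
move=> hr hc; have hr' : r2 != r1 by rewrite eq_sym.
rewrite /sw /dl !eqxx (negbTE hr') (negbTE hc) /=.
rewrite ?mulr1n ?mulr0n; lra.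
Qed.

Section Fixed.
Variables m n : nat.
Hypothesis hmn : (m <= n)%N.

Definition Good0 z := plan m n z /\ plan_cost d m n z <= d m n.

Lemma diag_le z i : plan m n z -> (i <= m)%N -> z i i <= Num.min (pi m i) (pi n i).
Proof.
move=> [z0 zr zc] hi; have hin : (i <= n)%N by apply: leq_trans hmn.
have hi' : (i < n.+1)%N by [].
have hi'' : (i < m.+1)%N by [].
rewrite le_min; apply/andP; split.
  rewrite -(zr i hi) (bigD1 (Ordinal hi')) //= lerDl; apply: sumr_ge0 => j _.
  by apply: z0; rewrite // -ltnS.
rewrite -(zc i hin) (bigD1 (Ordinal hi'')) //= lerDl; apply: sumr_ge0 => j _.
by apply: z0; rewrite // -ltnS.
Qed.

Lemma simp_at i : (i <= m)%N -> forall z, Good0 z -> exists z', Good0 z' /\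
  z' i i = Num.min (pi m i) (pi n i) /\ (forall x, x != i -> z x x <= z' x x).
Proof.
move=> hi z0; have hin : (i <= n)%N by apply: leq_trans hmn.
pose mu (z : nat -> nat -> R) := (\sum_(j < n.+1) (((j : nat) != i) && (0 < z i j)%R) +
              \sum_(k < m.+1) (((k : nat) != i) && (0 < z k i)%R))%N.
elim: (mu z0) {-2}z0 (leqnn (mu z0)) => [|N IH] z hN [hz hc].
all: have [hmin|hlt] := eqVneq (z i i) (Num.min (pi m i) (pi n i));
  first by exists z; split => //; split => // x _.
all: have hlt' : z i i < Num.min (pi m i) (pi n i) by rewrite lt_neqAle hlt diag_le.
all: move: hlt'; rewrite lt_min => /andP [hlm hln].
all: have [z0' zr zc] := hz.
all: have [/existsP [j /andP [hj hzj]] | hnj] :=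
  boolP [exists j : 'I_n.+1, ((j : nat) != i) && (0 < z i j)]; last first.
1,3: exfalso; move: hlm; rewrite -(zr i hi) (bigD1 (Ordinal (hin : (i < n.+1)%N))) //=.
1,2: rewrite big1 ?addr0 ?ltxx // => j hj; apply/eqP; rewrite eq_le z0' ?andbT;
  [|by [] | by rewrite -ltnS].
1,2: rewrite leNgt; apply/negP => hp; move/existsP: hnj; apply; exists j.
1,2: rewrite hp andbT; apply: contra hj => /eqP e; apply/eqP/val_inj.
1,2: by [].
all: have [/existsP [k /andP [hk hzk]] | hnk] :=
  boolP [exists k : 'I_m.+1, ((k : nat) != i) && (0 < z k i)]; last first.
1,3: exfalso; move: hln; rewrite -(zc i hin) (bigD1 (Ordinal (hi : (i < m.+1)%N))) //=.
1,2: rewrite big1 ?addr0 ?ltxx // => k hk; apply/eqP; rewrite eq_le z0' ?andbT;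
  [|by rewrite -ltnS | by []].
1,2: rewrite leNgt; apply/negP => hp; move/existsP: hnk; apply; exists k.
1,2: rewrite hp andbT; apply: contra hk => /eqP e; apply/eqP/val_inj.
1,2: by [].
  move: hN; rewrite /mu (bigD1 j) //= hj hzj /=; lia.
set e := Num.min (z i j) (z k i).
have he0 : 0 <= e by rewrite le_min (ltW hzj) (ltW hzk).
have he1 : e <= z i j by rewrite ge_min lexx.
have he2 : e <= z k i by rewrite ge_min lexx orbT.
have hjn : (j <= n)%N by rewrite -ltnS.
have hkm : (k <= m)%N by rewrite -ltnS.
have hji : i != j by rewrite eq_sym.
have hki : i != k by rewrite eq_sym.
pose z' := sw z i k i j e.
have hz' : plan m n z' := sw_plan hz hi hkm hin hjn hki hji he0 he1 he2.
have hc' : plan_cost d m n z' <= d m n.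
  apply: le_trans hc; rewrite /z' sw_cost // gerDl; apply: mulr_ge0_le0 => //.
  have := Ddiag i; have := tri k i j; lra.
have hrow : forall x, (x < n.+1)%N -> ((x != i) && (0 < z' i x)%R) -> ((x != i) && (0 < z i x)%R).
  move=> x _ /andP [hx hp]; rewrite hx /=; apply: lt_le_trans hp _.
  apply: sw_le => //; first by rewrite eqxx /= (negbTE hx).
  by rewrite (negbTE hki).
have hcol : forall x, (x < m.+1)%N -> ((x != i) && (0 < z' x i)%R) -> ((x != i) && (0 < z x i)%R).
  move=> x _ /andP [hx hp]; rewrite hx /=; apply: lt_le_trans hp _.
  apply: sw_le => //; first by rewrite (negbTE hx).
  by rewrite eq_sym (negbTE hji) andbF.
have hmu : (mu z' < mu z)%N.
  have [hle|hgt] := boolP (z i j <= z k i).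
    have hzero : z' i j = 0 by rewrite /z' sw_eq12 // /e (min_l hle) subrr.
    have h1 : (\sum_(x < n.+1) (((x : nat) != i) && (0 < z' i x)%R) <
               \sum_(x < n.+1) (((x : nat) != i) && (0 < z i x)%R))%N.
      apply: (@bool_sum_lt (n.+1) (fun x => (x != i) && (0 < z i x)%R) (fun x => (x != i) && (0 < z' i x)%R) j) => //; first by rewrite hj hzj.
      by rewrite hzero ltxx andbF.
    have h2 : (\sum_(x < m.+1) (((x : nat) != i) && (0 < z' x i)%R) <=
               \sum_(x < m.+1) (((x : nat) != i) && (0 < z x i)%R))%N.
      exact: (@bool_sum_le (m.+1) (fun x => (x != i) && (0 < z x i)%R) (fun x => (x != i) && (0 < z' x i)%R)).
    by rewrite /mu -addSn leq_add.
  rewrite -ltNge in hgt.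
  have hzero : z' k i = 0 by rewrite /z' sw_eq21 // /e (min_r (ltW hgt)) subrr.
  have h1 : (\sum_(x < n.+1) (((x : nat) != i) && (0 < z' i x)%R) <=
             \sum_(x < n.+1) (((x : nat) != i) && (0 < z i x)%R))%N.
    exact: (@bool_sum_le (n.+1) (fun x => (x != i) && (0 < z i x)%R) (fun x => (x != i) && (0 < z' i x)%R)).
  have h2 : (\sum_(x < m.+1) (((x : nat) != i) && (0 < z' x i)%R) <
             \sum_(x < m.+1) (((x : nat) != i) && (0 < z x i)%R))%N.
    apply: (@bool_sum_lt (m.+1) (fun x => (x != i) && (0 < z x i)%R) (fun x => (x != i) && (0 < z' x i)%R) k) => //; first by rewrite hk hzk.
    by rewrite hzero ltxx andbF.
  by rewrite /mu -addnS leq_add.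
have [z'' [hg [hd hx]]] := IH z' (leq_trans hmu hN) (conj hz' hc').
exists z''; split => //; split => // x hxi; apply: le_trans (hx x hxi).
apply: sw_ge => //; first by rewrite (negbTE hxi).
by rewrite (negbTE hxi) andbF.
Qed.

End Fixed.
End Aux.

Section Main.
Variable R : realType.
Variable pi : nat -> nat -> R.
Variable d : int -> int -> R.
Hypothesis Hpi : prob_seq pi.
Hypothesis Hd : is_d pi d.
Variables m n : nat.
Hypothesis hmn : (m <= n)%N.

Lemma simp_all t : (t <= m.+1)%N -> exists z, Good0 pi d m n z /\
  forall i, (i < t)%N -> z i i = Num.min (pi m i) (pi n i).
Proof.
elim: t => [|t IH] ht.
  by have [z [hz hc]] := d_opt Hd m n; exists z; split => //; split => //; rewrite hc.
have [z [hg hs]] := IH (ltnW ht).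
have [z' [hg' [hd hx]]] := simp_at Hpi Hd hmn (ht : (t <= m)%N) hg.
exists z'; split => // i; rewrite ltnS leq_eqVlt => /orP [/eqP -> //|hi].
have hit : i != t by rewrite neq_ltn hi.
apply/eqP; rewrite eq_le; apply/andP; split.
  by apply: diag_le; [ | case: hg' | apply: leq_trans (ltnW hi) _].
by rewrite -hs // hx.
Qed.

Hypothesis HQ : condQ d (n%:Z - 1).

Lemma Qineq r s c e : (r <= s)%N -> (s <= c)%N -> (c <= e)%N -> (e <= n)%N ->
  D d r e + D d s c <= D d r c + D d s e.
Proof.
move=> h1 h2 h3 h4; rewrite /D; apply: HQ; clear -h1 h2 h3 h4; lia.
Qed.

Definition Good (z : nat -> nat -> R) := Good0 pi d m n z /\ simple_plan pi m n z.

Definition Rfix (z : nat -> nat -> R) t := forall j k l, (t < j)%N -> (j < k)%N -> (k < l)%N ->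
  (j <= m)%N -> (l <= n)%N -> ~ (0 < z t k /\ 0 < z j l).

Definition KF (z : nat -> nat -> R) t K := forall k j l, (k < K)%N -> (t < j)%N -> (j < k)%N -> (k < l)%N ->
  (j <= m)%N -> (l <= n)%N -> ~ (0 < z t k /\ 0 < z j l).

Lemma unc_good z r s c e : Good z -> (r < s)%N -> (s < c)%N -> (c < e)%N ->
  (s <= m)%N -> (e <= n)%N -> 0 < z r c -> 0 < z s e ->
  Good (sw z r s e c (Num.min (z r c) (z s e))).
Proof.
move=> [[hz hc] hs] h1 h2 h3 hsm hen hp1 hp2.
set ep := Num.min (z r c) (z s e).
have he0 : 0 <= ep by rewrite le_min (ltW hp1) (ltW hp2).
have he1 : ep <= z r c by rewrite ge_min lexx.
have he2 : ep <= z s e by rewrite ge_min lexx orbT.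
have hrs : r != s by rewrite neq_ltn h1.
have hec : e != c by rewrite neq_ltn h3 orbT.
have hrm : (r <= m)%N by apply: leq_trans (ltnW h1) hsm.
have hcn : (c <= n)%N by apply: leq_trans (ltnW h3) hen.
split; first split.
- exact: sw_plan.
- apply: le_trans hc; rewrite sw_cost //.
  rewrite gerDl; apply: mulr_ge0_le0 => //.
  have := @Qineq r s c e (ltnW h1) (ltnW h2) (ltnW h3) hen; lra.
- move=> x hx; rewrite -(hs x hx); apply/eqP; rewrite eq_le; apply/andP; split.
    apply: sw_le => //; apply/negP => /andP [/eqP h /eqP h']; clear -h h' h1 h2 h3; lia.
  apply: sw_ge => //; apply/negP => /andP [/eqP h /eqP h']; clear -h h' h1 h2 h3; lia.
Qed.

Lemma sw_pos (z : nat -> nat -> R) r1 r2 c1 c2 ep x y : 0 <= ep -> 0 < sw z r1 r2 c1 c2 ep x y ->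
  0 < z x y \/ (x = r1 /\ y = c1) \/ (x = r2 /\ y = c2).
Proof.
move=> he hp.
have [/andP [/eqP -> /eqP ->]|n1] := boolP ((x == r1) && (y == c1)); first by right; left.
have [/andP [/eqP -> /eqP ->]|n2] := boolP ((x == r2) && (y == c2)); first by right; right.
by left; apply: lt_le_trans hp _; apply: sw_le.
Qed.

Lemma sw_same (z : nat -> nat -> R) r1 r2 c1 c2 ep x y :
  ~~ ((x == r1) && (y == c1)) -> ~~ ((x == r2) && (y == c2)) ->
  ~~ ((x == r1) && (y == c2)) -> ~~ ((x == r2) && (y == c1)) ->
  sw z r1 r2 c1 c2 ep x y = z x y.
Proof.
move=> h1 h2 h3 h4; rewrite /sw /dl -!natrM !mulnb (negbTE h1) (negbTE h2) (negbTE h3) (negbTE h4) /=.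
by rewrite !subr0 addr0 mulr0 addr0.
Qed.


Lemma nat_sum_le N (f g : nat -> nat) :
  (forall x, (x < N)%N -> (f x <= g x)%N) -> (\sum_(x < N) f x <= \sum_(x < N) g x)%N.
Proof. by move=> h; apply: leq_sum => x _; apply: h. Qed.

Lemma nat_sum_lt N (f g : nat -> nat) x0 : (x0 < N)%N ->
  (forall x, (x < N)%N -> (f x <= g x)%N) -> (f x0 < g x0)%N ->
  (\sum_(x < N) f x < \sum_(x < N) g x)%N.
Proof.
move=> hx h h0.
rewrite (bigD1 (Ordinal hx)) //= [X in (_ < X)%N](bigD1 (Ordinal hx)) //=.
rewrite -addSn leq_add //; apply: leq_sum => x _; exact: h.
Qed.

Lemma pres_Rfix (z : nat -> nat -> R) r s c e ep i : 0 <= ep -> (i < r)%N -> (r < s)%N ->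
  (s < c)%N -> (c < e)%N -> (s <= m)%N -> (e <= n)%N -> 0 < z r c -> 0 < z s e ->
  Rfix z i -> Rfix (sw z r s e c ep) i.
Proof.
move=> he hir hrs hsc hce hsm hen hp1 hp2 hR j k l hij hjk hkl hjm hln [q1 q2].
have hir' : i != r by rewrite neq_ltn hir.
have his' : i != s by rewrite neq_ltn (ltn_trans hir hrs).
rewrite sw_same ?(negbTE hir') ?(negbTE his') // in q1.
have hrm : (r <= m)%N by apply: leq_trans (ltnW hrs) hsm.
case: (sw_pos he q2) => [q3|[[ej el]|[ej el]]]; try subst j l.
- exact: (hR j k l).
- have [hkc|hck] := ltnP k c.
    exact: (hR r k c hij hjk hkc hjm (leq_trans (ltnW hce) hen) (conj q1 hp1)).
  exact: (hR s k e (ltn_trans hir hrs) (leq_trans hsc hck) hkl hsm hln (conj q1 hp2)).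
- exact: (hR r k c hir (ltn_trans hrs hjk) hkl hrm (leq_trans (ltnW hce) hen) (conj q1 hp1)).
Qed.

Lemma pres_KF (z : nat -> nat -> R) t s K e ep : 0 <= ep -> (t < s)%N ->
  (s < K)%N -> (K < e)%N -> (s <= m)%N -> (e <= n)%N -> 0 < z s e ->
  KF z t K -> KF (sw z t s e K ep) t K.
Proof.
move=> he hts hsK hKe hsm hen hp2 hK k j l hk htj hjk hkl hjm hln [q1 q2].
have hke : k != e by rewrite neq_ltn (ltn_trans hk hKe).
have hkK : k != K by rewrite neq_ltn hk.
have hts' : t != s by rewrite neq_ltn hts.
rewrite sw_same ?eqxx ?(negbTE hke) ?(negbTE hkK) ?(negbTE hts') ?andbF // in q1.
case: (sw_pos he q2) => [q3|[[hjt _]|[ej el]]]; try subst j l.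
- exact: (hK k j l).
- by move: htj; rewrite hjt ltnn.
- exact: (hK k s e hk htj hjk (ltn_trans hk hKe) hjm hen (conj q1 hp2)).
Qed.

Lemma KF_done (z : nat -> nat -> R) t K :
  ~~ ((0 < z t K) && [exists j : 'I_m.+1, [exists l : 'I_n.+1,
        [&& (t < j)%N, (j < K)%N, (K < l)%N & 0 < z j l]]]) ->
  KF z t K -> KF z t K.+1.
Proof.
move=> hn hK k j l; rewrite ltnS leq_eqVlt => /orP [/eqP ->|hk]; last exact: hK.
move=> htj hjk hkl hjm hln [q1 q2]; move: hn; rewrite q1 /=; apply/negP/negPn.
apply/existsP; exists (Ordinal (hjm : (j < m.+1)%N)); apply/existsP.
by exists (Ordinal (hln : (l < n.+1)%N)); rewrite /= htj hjk hkl q2.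
Qed.


Lemma fixK t K : (t <= m)%N -> forall z, Good z -> (forall i, (i < t)%N -> Rfix z i) ->
  KF z t K ->
  exists z', Good z' /\ (forall i, (i < t)%N -> Rfix z' i) /\ KF z' t K.+1.
Proof.
move=> ht z0.
pose nuF (z : nat -> nat -> R) (x : nat) :=
  (\sum_(y < n.+1) [&& (t < x)%N, (x < K)%N, (K < y)%N & (0 < z x y)%R])%N.
pose nu z := (\sum_(x < m.+1) nuF z x)%N.
elim: (nu z0) {-2}z0 (leqnn (nu z0)) => [|N IH] z hN hg hR hK.
all: have [hc|hnc] := boolP ((0 < z t K) && [exists j : 'I_m.+1, [exists l : 'I_n.+1,
   [&& (t < j)%N, (j < K)%N, (K < l)%N & 0 < z j l]]]); last first.
1,3: by exists z; split => //; split => //; apply: KF_done.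
all: case/andP: hc => hpt /existsP [j /existsP [l /and4P [htj hjK hKl hpjl]]].
  exfalso; move: hN; rewrite /nu (bigD1 j) //= /nuF (bigD1 l) //= htj hjK hKl hpjl.
  by rewrite add1n addSn.
have hjm : (j <= m)%N by rewrite -ltnS.
have hln : (l <= n)%N by rewrite -ltnS.
set ep := Num.min (z t K) (z j l).
have hg' : Good (sw z t j l K ep) := unc_good hg htj hjK hKl hjm hln hpt hpjl.
have he0 : 0 <= ep by rewrite le_min (ltW hpt) (ltW hpjl).
have hR' : forall i, (i < t)%N -> Rfix (sw z t j l K ep) i.
  by move=> i hit; apply: pres_Rfix => //; apply: hR.
have hK' : KF (sw z t j l K ep) t K by apply: pres_KF.
have htj' : t != (j : nat) by rewrite neq_ltn htj.
have hlK : (l : nat) != K by rewrite neq_ltn hKl orbT.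
have [hle|hgt] := boolP (z t K <= z j l).
  have hz0 : sw z t j l K ep t K = 0 by rewrite sw_eq12 // /ep (min_l hle) subrr.
  exists (sw z t j l K ep); split => //; split => //.
  by apply: KF_done => //; rewrite hz0 ltxx.
rewrite -ltNge in hgt.
have hz0 : sw z t j l K ep j l = 0 by rewrite sw_eq21 // /ep (min_r (ltW hgt)) subrr.
have hpw : forall x y, [&& (t < x)%N, (x < K)%N, (K < y)%N & 0 < sw z t j l K ep x y] ->
    [&& (t < x)%N, (x < K)%N, (K < y)%N & 0 < z x y].
  move=> x y /and4P [h1 h2 h3 h4]; rewrite h1 h2 h3 /=.
  apply: lt_le_trans h4 _; apply: sw_le => //.
    by apply/negP => /andP [/eqP hx _]; move: h1; rewrite hx ltnn.
  by apply/negP => /andP [_ /eqP hy]; move: h3; rewrite hy ltnn.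
have hmu : (nu (sw z t j l K ep) < nu z)%N.
  apply: (@nat_sum_lt _ (nuF (sw z t j l K ep)) (nuF z) j) => //.
    move=> x _; apply: (@bool_sum_le _ (fun y => [&& (t < x)%N, (x < K)%N, (K < y)%N & 0 < z x y])
       (fun y => [&& (t < x)%N, (x < K)%N, (K < y)%N & 0 < sw z t j l K ep x y])).
    by move=> y _; apply: hpw.
  apply: (@bool_sum_lt _ (fun y => [&& (t < j)%N, (j < K)%N, (K < y)%N & 0 < z j y])
       (fun y => [&& (t < j)%N, (j < K)%N, (K < y)%N & 0 < sw z t j l K ep j y]) l) => //.
  - by move=> y _; apply: hpw.
  - by rewrite htj hjK hKl hpjl.
  - by rewrite hz0 ltxx !andbF.
exact: (IH _ (leq_trans hmu hN) hg' hR' hK').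
Qed.


Lemma fixRow t : (t <= m)%N -> forall z, Good z -> (forall i, (i < t)%N -> Rfix z i) ->
  exists z', Good z' /\ forall i, (i < t.+1)%N -> Rfix z' i.
Proof.
move=> ht z hg hR.
have H : forall K, exists z', Good z' /\ (forall i, (i < t)%N -> Rfix z' i) /\ KF z' t K.
  elim=> [|K [z1 [hg1 [hR1 hK1]]]]; first by exists z; split => //; split => // k.
  exact: (fixK ht hg1 hR1 hK1).
have [z' [hg' [hR' hK']]] := H n.+1.
exists z'; split => // i; rewrite ltnS leq_eqVlt => /orP [/eqP ->|hi]; last exact: hR'.
move=> j k l htj hjk hkl hjm hln.
exact: (hK' k j l (ltnW (leq_trans hkl hln)) htj hjk hkl hjm hln).
Qed.

Lemma allRows t : (t <= m.+1)%N -> exists z, Good z /\ forall i, (i < t)%N -> Rfix z i.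
Proof.
elim: t => [|t IH] ht.
  have [z [hg hs]] := simp_all (leqnn m.+1).
  by exists z; split => //; split => // i hi; apply: hs.
have [z [hg hR]] := IH (ltnW ht).
exact: (fixRow (ht : (t <= m)%N) hg hR).
Qed.

End Main.

Theorem proposition2 (R : realType) (pi : nat -> nat -> R) (d : int -> int -> R)
    (n : nat) :
  prob_seq pi -> is_d pi d -> condQ d (n%:Z - 1) ->
  forall m : nat, (m <= n)%N ->
    exists z : nat -> nat -> R,
      [/\ transport_plan pi m n z, plan_cost d m n z = d m%:Z n%:Z,
          simple_plan pi m n z & nested_plan m n z].
Proof.
move=> Hpi Hd HQ m hmn.
have [z [[[hz hc] hs] hR]] := allRows Hpi Hd hmn HQ (leqnn m.+1).
exists z; split => //.
  by apply/eqP; rewrite eq_le hc (d_min Hd hz).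
move=> [i [j [k [l [/andP [hij hjk] hkl hjm hln [p1 p2]]]]]].
exact: (hR i (ltnW (leq_trans hij hjm)) j k l hij hjk hkl hjm hln (conj p1 p2)).
Qed.
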